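(* Let $S$ be a poset, $S\otimes_i G_i$ a terminating ordered join, and $\sigma\colon S\to S$ a weakly order-preserving involution. Suppose $G_i\simeq_1 G_{\sigma(i)}$ for all $i\in S$ and that the set $S^\sigma=\{i\in S:\sigma(i)=i\}$ of fixed points of $\sigma$ is a lower set of $S$. Then $S\otimes_i G_i\simeq_0 S^\sigma\otimes_i G_i$, where $S^\sigma$ carries the induced order and the right-hand side is the ordered join of the games $G_i$, $i\in S^\sigma$.
   Context: All games are impartial combinatorial games under normal play; a game is determined by its set of options, and $G \to G'$ means $G'$ is an option of $G$. A game is terminating if it admits no infinite sequence of moves. $\mathbf{0}$ denotes the game with no options. The Grundy number of a terminating game $G$ is the ordinal $\Gamma_0(G)=\operatorname{mex}\{\Gamma_0(G') : G\to G'\}$, where $\operatorname{mex}\Lambda$ is the least ordinal not in the set of ordinals $\Lambda$. The Grundy set is $\Gamma_1(G)=\{\Gamma_0(G') : G\to G'\}$. $G\simeq_0 H$ means $\Gamma_0(G)=\Gamma_0(H)$; $G\simeq_1 H$ means $\Gamma_1(G)=\Gamma_1(H)$. Ordered join: for a poset $S$ and a family $(G_i)_{i\in S}$ of games, $S \otimes_i G_i$ is the game whose options are exactly the ordered joins $S \otimes_i G'_i$ obtained by choosing one $i_0\in S$ and an option $G_{i_0}\to G'_{i_0}$, and setting $G'_i=\mathbf{0}$ for all $i>i_0$ and $G'_i=G_i$ for all other $i\ne i_0$. An involution $\sigma\colon S\to S$ (i.e. $\sigma\circ\sigma=\mathrm{id}$) is weakly order-preserving if for each $i\in S$ the set $\{j\in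 S : i<j \text{ or } \sigma(i)<j\}$ is mapped onto itself by $\sigma$. A lower set $L\subseteq S$ is a subset such that $j\in L$ and $i\le j$ imply $i\in L$. *)

(* Defs.v *)
From HB Require Import structures.
From mathcomp Require Import all_boot all_order.
Set Implicit Arguments. Unset Strict Implicit. Unset Printing Implicit Defensive.

(* ---------- Ordinals (Brouwer/Aczel-style, arbitrary branching) ----------
   [osup A f] denotes the least ordinal strictly above every [f a],
   i.e. sup_a (f a + 1).  Ordinals are compared up to [oeq]. *)
Inductive Ord : Type := osup : forall (A : Type), (A -> Ord) -> Ord.

Fixpoint ole (x y : Ord) : Prop :=
  match x with
  | osup _ f => forall a, match y with osup _ g => exists b, ole (f a) (g b) end
  end.

Definition olt (x y : Ord) : Prop :=
  match y with osup _ g => exists b, ole x (g b) end.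

Definition oeq (x y : Ord) : Prop := ole x y /\ ole y x.

Definition is_mex (L : Ord -> Prop) (a : Ord) : Prop :=
  ~ L a /\ (forall b, olt b a -> L b).

(* ---------- Games as positions of a move graph ----------
   A game is a position [x] of a type [P] with move relation [mv]
   ([mv x y] : y is an option of x). *)
Definition terminating {P : Type} (mv : P -> P -> Prop) (x : P) : Prop :=
  ~ exists f : nat -> P, f 0 = x /\ forall n, mv (f n) (f n.+1).

Definition grundy_set {P : Type} (mv : P -> P -> Prop) (Gam : P -> Ord) (x : P)
  : Ord -> Prop := fun b => exists y, mv x y /\ oeq (Gam y) b.

Definition grundy_fun {P : Type} (mv : P -> P -> Prop) (Gam : P -> Ord) : Prop :=
  forall x, terminating mv x -> is_mex (grundy_set mv Gam x) (Gam x).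

(* Moves of a component game in [option X]; [None] is the game 0. *)
Definition mvo {X : Type} (mv : X -> X -> Prop) (a b : option X) : Prop :=
  match a, b with Some x, Some y => mv x y | _, _ => False end.

(* ---------- Ordered join ----------
   Index set [I] with strict order [lt]; positions are families of
   component positions. *)
Definition jmove {I X : Type} (lt : I -> I -> Prop) (mv : X -> X -> Prop)
  (p q : I -> option X) : Prop :=
  exists i0, mvo mv (p i0) (q i0) /\
    (forall j, lt i0 j -> q j = None) /\
    (forall j, j <> i0 -> ~ lt i0 j -> q j = p j).

Definition join_start {I X : Type} (G : I -> X) : I -> option X :=
  fun i => Some (G i).

Definition weakly_order_preserving {d : Order.disp_t} {S : porderType d}
  (sigma : S -> S) : Prop :=
  forall i : S,
    let U := fun j : S => (i < j)%O \/ (sigma i < j)%O in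
    (forall j, U j -> U (sigma j)) /\ (forall k, U k -> exists j, U j /\ sigma j = k).

Definition lower_set {d : Order.disp_t} {S : porderType d} (L : S -> Prop) : Prop :=
  forall i j : S, L j -> (i <= j)%O -> L i.

Definition fixpts {d : Order.disp_t} {S : porderType d} (sigma : S -> S) : Type :=
  {i : S | sigma i = i}.

Definition fix_lt {d : Order.disp_t} {S : porderType d} (sigma : S -> S)
  (a b : fixpts sigma) : Prop := (proj1_sig a < proj1_sig b)%O.
Arguments fix_lt {d S} sigma a b.

(* Main.v *)
Require Import Defs.
From mathcomp Require Import all_boot all_order.
From Stdlib Require Import Classical ClassicalEpsilon FunctionalExtensionality.
From Stdlib Require Import Relation_Operators Transitive_Closure.

Lemma ole_refl x : ole x x.
Proof. induction x as [A f IH]; simpl; intros a; exists a; apply IH. Qed.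

Lemma ole_trans x : forall y z, ole x y -> ole y z -> ole x z.
Proof.
  induction x as [A f IH]; intros [B g] [C h] H1 H2 a; simpl in *.
  destruct (H1 a) as [b Hb]; destruct (H2 b) as [c Hc]; exists c; eauto.
Qed.

Lemma oeq_sym {x y} : oeq x y -> oeq y x.
Proof. by case. Qed.
Lemma oeq_trans {x y z} : oeq x y -> oeq y z -> oeq x z.
Proof. case=> a b [c e]; split; eapply ole_trans; eauto. Qed.
Lemma oeq_refl x : oeq x x.
Proof. split; apply ole_refl. Qed.

Lemma ole_total x : forall y, ole x y \/ olt y x.
Proof.
  induction x as [A f IH]; intros [B g].
  destruct (classic (forall a, exists b, ole (f a) (g b))) as [H|H].
  - left; exact H.
  - right. apply not_all_ex_not in H as [a Ha].
    exists a. specialize (IH a). destruct (f a) as [C h] eqn:E. simpl. intros b.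
    destruct (IH (g b)) as [H'|H'].
    + exfalso; apply Ha; exists b; exact H'.
    + exact H'.
Qed.

Lemma ord_tri x y : olt x y \/ olt y x \/ oeq x y.
Proof.
  destruct (ole_total x y) as [H1|H1]; [|tauto].
  destruct (ole_total y x) as [H2|H2]; [|tauto].
  right; right; split; assumption.
Qed.

Lemma chain_build (P : Type) (mv : P -> P -> Prop) (Q : P -> Prop) :
  (forall y, Q y -> exists z, mv y z /\ Q z) -> forall x, Q x ->
  exists f : nat -> P, f 0 = x /\ forall n, mv (f n) (f n.+1).
Proof.
  move=> H x Hx.
  pose step (s : {y | Q y}) : {y | Q y} :=
    let e := constructive_indefinite_description _ (H _ (proj2_sig s)) in
    exist _ (proj1_sig e) (proj2 (proj2_sig e)).
  exists (fun n => proj1_sig (iter n step (exist _ x Hx))); split => // n.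
  rewrite iterS. set s := iter n step _. rewrite /step /=.
  by case: constructive_indefinite_description => z [].
Qed.

Lemma term_acc {P : Type} {mv : P -> P -> Prop} {x} :
  terminating mv x -> Acc (fun a b => mv b a) x.
Proof.
  move=> Ht. apply: NNPP => Hna. apply: Ht.
  apply: (@chain_build P mv (fun y => ~ Acc (fun a b => mv b a) y)) Hna.
  move=> y Hy. apply: NNPP => Hne. apply: Hy. constructor => z Hz.
  apply: NNPP => Hz'. apply: Hne. by exists z.
Qed.

Lemma term_step {P : Type} {mv : P -> P -> Prop} {x y} :
  terminating mv x -> mv x y -> terminating mv y.
Proof.
  move=> Ht Hxy [f [Hf0 Hf]]. apply: Ht.
  exists (fun n => if n is n'.+1 then f n' else x). split=> // [[|n]] /=.
  - by rewrite Hf0.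
  - exact: Hf.
Qed.

Lemma term_transfer {P Q : Type} {mvP : P -> P -> Prop} {mvQ : Q -> Q -> Prop}
  {R : P -> Q -> Prop} :
  (forall p q q', R p q -> mvQ q q' -> exists p', mvP p p' /\ R p' q') ->
  forall p q, R p q -> terminating mvP p -> terminating mvQ q.
Proof.
  move=> H p q Hr Ht [f [Hf0 Hf]]. apply: Ht.
  have st : forall y : P * nat, R y.1 (f y.2) ->
      exists z : P * nat, (mvP y.1 z.1 /\ z.2 = y.2.+1) /\ R z.1 (f z.2).
    move=> [a n] /= Ha. have [p' [m r]] := H _ _ _ Ha (Hf n).
    by exists (p', n.+1).
  have H0 : R (p, 0).1 (f (p, 0).2) by rewrite /= Hf0.
  have [g [Hg0 Hg]] := @chain_build (P * nat)
     (fun a b => mvP a.1 b.1 /\ b.2 = a.2.+1) (fun a => R a.1 (f a.2)) st (p, 0) H0.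
  exists (fun n => (g n).1); rewrite Hg0; split=> // n; exact: (proj1 (Hg n)).
Qed.

Lemma sg_lemma (P Q : Type) (mvP : P -> P -> Prop) (mvQ : Q -> Q -> Prop) GP GQ
  (R : P -> Q -> Prop) :
  grundy_fun mvP GP -> grundy_fun mvQ GQ ->
  (forall p q, R p q -> terminating mvP p) ->
  (forall p q p', R p q -> mvP p p' ->
     (exists p'', mvP p' p'' /\ R p'' q) \/ (exists q', mvQ q q' /\ R p' q')) ->
  (forall p q q', R p q -> mvQ q q' -> exists p', mvP p p' /\ R p' q') ->
  forall p q, R p q -> oeq (GP p) (GQ q).
Proof.
  move=> gP gQ HT H1 H2 p q Hr.
  have Acc1 := Acc_clos_trans P (fun a b => mvP b a) p (term_acc (HT _ _ Hr)).
  elim: Acc1 q Hr => {}p _ IH q Hr.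
  have tp := HT _ _ Hr. have tq := term_transfer H2 _ _ Hr tp.
  have [mp1 mp2] := gP p tp. have [mq1 mq2] := gQ q tq.
  case: (ord_tri (GP p) (GQ q)) => [lt|[lt|eq]] //.
  - have [q' [mq' eq']] := mq2 _ lt.
    have [p' [mp' Hr']] := H2 _ _ _ Hr mq'.
    have IHp := IH p' (t_step _ _ _ _ mp') q' Hr'.
    exfalso. apply: mp1. exists p'. split=> //.
    exact: oeq_trans IHp eq'.
  - have [p' [mp' eq']] := mp2 _ lt.
    case: (H1 _ _ _ Hr mp') => [[p'' [mp'' Hr'']]|[q' [mq' Hr']]].
    + have IHp := IH p'' (t_trans _ _ _ p' _ (t_step _ _ _ _ mp'') (t_step _ _ _ _ mp')) q Hr''.
      have tp' := term_step tp mp'. have [m1 _] := gP p' tp'. exfalso; apply: m1.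
      exists p''; split=> //. exact: oeq_trans IHp (oeq_sym eq').
    + have IHp := IH p' (t_step _ _ _ _ mp') q' Hr'.
      exfalso; apply: mq1. exists q'; split=> //.
      apply: oeq_trans (oeq_sym IHp) eq'.
Qed.
Import Order.POrderTheory.
Local Open Scope order_scope.

Definition Uset {d} {S : porderType d} (sigma : S -> S) (i j : S) : Prop :=
  (i < j) \/ (sigma i < j).


Lemma Usym {d} {S : porderType d} {sigma : S -> S} :
  weakly_order_preserving sigma -> forall i j, Uset sigma i j -> Uset sigma i (sigma j).
Proof. move=> w i j. exact: (proj1 (w i) j). Qed.
Arguments Usym {d S sigma} w {i j}.

Lemma Uswap {d} {S : porderType d} {sigma : S -> S} :
  (forall i, sigma (sigma i) = i) -> forall i j, Uset sigma (sigma i) j -> Uset sigma i j.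
Proof. move=> inv i j; rewrite /Uset inv; tauto. Qed.
Arguments Uswap {d S sigma} inv {i j}.

Lemma notU_self {d} {S : porderType d} {sigma : S -> S} :
  weakly_order_preserving sigma -> forall i, ~ Uset sigma i i.
Proof.
  move=> w i [h|h]; first by rewrite ltxx in h.
  have [h'|h'] := Usym w (or_intror h : Uset sigma i i).
  - by move: (lt_asym i (sigma i)); rewrite h h'.
  - by rewrite ltxx in h'.
Qed.

Lemma notU_sig {d} {S : porderType d} {sigma : S -> S} :
  (forall i, sigma (sigma i) = i) -> weakly_order_preserving sigma ->
  forall i, ~ Uset sigma i (sigma i).
Proof. move=> inv w i h; apply: (notU_self w i); have := Usym w h; by rewrite inv. Qed.

Lemma nofixU {d} {S : porderType d} {sigma : S -> S} :
  (forall i, sigma (sigma i) = i) -> lower_set (fun i => sigma i = i) ->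
  forall i j, sigma i <> i -> Uset sigma i j -> sigma j <> j.
Proof.
  move=> inv low i j ni [h|h] fj; apply: ni.
  - have hl := ltW h. exact: (low i j fj hl).
  - have := low (sigma i) j fj (ltW h). rewrite inv => e; exact: esym e.
Qed.

Lemma fixU {d} {S : porderType d} {sigma : S -> S} :
  weakly_order_preserving sigma -> forall k j, sigma k = k -> k < j -> k < sigma j.
Proof.
  move=> w k j fk h. have [//|] := Usym w (or_introl h : Uset sigma k j). by rewrite fk.
Qed.
Arguments fixU {d S sigma} w {k j}.

Lemma sig_eq {d} {S : porderType d} {sigma : S -> S} (k k' : fixpts sigma) :
  proj1_sig k = proj1_sig k' -> k = k'.
Proof. case: k => k hk; case: k' => k' hk' /= e; subst; f_equal; exact: eq_irrelevance. Qed.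

Definition Cpair {d} {S : porderType d} {X} (mv : X -> X -> Prop) (sigma : S -> S)
  (Go : option X -> Ord) (p : S -> option X) (i : S) : Prop :=
  (forall b, grundy_set (mvo mv) Go (p i) b <-> grundy_set (mvo mv) Go (p (sigma i)) b) \/
  (oeq (Go (p i)) (Go (p (sigma i))) /\ forall j, Uset sigma i j -> p j = None).

Lemma FM {d} {S : porderType d} {X} (mv : X -> X -> Prop) (sigma : S -> S) Go
  (p p' : S -> option X) (k0 : S) :
  (forall i, sigma (sigma i) = i) -> weakly_order_preserving sigma ->
  lower_set (fun i => sigma i = i) -> sigma k0 = k0 ->
  (forall j, k0 < j -> p' j = None) -> (forall j, j <> k0 -> ~ k0 < j -> p' j = p j) ->
  (forall i, Cpair mv sigma Go p i) -> forall i, Cpair mv sigma Go p' i.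
Proof.
  move=> inv w low fk Hz Hk HC i.
  case: (eqVneq (sigma i) i) => [fi|ni].
  - by left; rewrite fi.
  have ni' : sigma i <> i by apply/eqP.
  case hi: (k0 < i).
  - left; rewrite (Hz i) // (Hz (sigma i)) //; exact: (fixU w fk).
  have ik : i <> k0 by move=> e; move/eqP: ni; apply; rewrite e fk.
  have sk : sigma i <> k0 by move=> e; move/eqP: ni; apply; rewrite e -[RHS]inv e fk.
  have nsk : ~ k0 < sigma i by move=> h; have := fixU w fk h; by rewrite inv hi.
  rewrite /Cpair (Hk i ik (elimT negP (negbT hi))) (Hk _ sk nsk).
  case: (HC i) => [h|[h1 h2]]; [by left|right; split=> // j hj].
  case hj': (k0 < j); first exact: Hz.
  have jk : j <> k0 by move=> e; subst j; apply: (nofixU inv low i k0 ni' hj fk).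
  rewrite Hk //; [exact: h2 | by rewrite hj'].
Qed.

Lemma RF {d} {S : porderType d} {X} (mv : X -> X -> Prop) (sigma : S -> S) Go
  (p p' : S -> option X) (i0 : S) :
  (forall i, sigma (sigma i) = i) -> weakly_order_preserving sigma ->
  sigma i0 <> i0 -> p i0 <> None ->
  oeq (Go (p' i0)) (Go (p' (sigma i0))) ->
  (forall j, Uset sigma i0 j -> p' j = None) ->
  (forall j, ~ Uset sigma i0 j -> j <> i0 -> j <> sigma i0 -> p' j = p j) ->
  (forall i, Cpair mv sigma Go p i) -> forall i, Cpair mv sigma Go p' i.
Proof.
  move=> inv w ni0 pn Heq HU Hk HC i.
  case: (eqVneq i i0) => [->|n1].
    by right; split.
  case: (eqVneq i (sigma i0)) => [->|n2].
    right; rewrite inv; split; first exact: oeq_sym.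
    move=> j hj; apply: HU; exact: (Uswap inv).
  case: (classic (Uset sigma i0 i)) => [hu|hu].
    by left; rewrite HU // HU //; apply: (Usym w).
  have hu' : ~ Uset sigma i0 (sigma i) by move=> h; apply: hu; have := Usym w h; rewrite inv.
  have s1 : sigma i <> i0 by move=> e; move/eqP: n2; apply; rewrite -e inv.
  have s2 : sigma i <> sigma i0 by move=> e; move/eqP: n1; apply; rewrite -(inv i) e inv.
  have n1' : i <> i0 by apply/eqP.
  have n2' : i <> sigma i0 by apply/eqP.
  rewrite /Cpair (Hk i hu n1' n2') (Hk _ hu' s1 s2).
  case: (HC i) => [h|[h1 h2]]; [by left|right; split=> // j hj].
  case: (classic (Uset sigma i0 j)) => [hj'|hj']; first exact: HU.
  case: (eqVneq j i0) => [e|m1].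
    by subst j; have := h2 _ hj.
  case: (eqVneq j (sigma i0)) => [e|m2].
    subst j; have := Usym w hj; rewrite inv => /h2.  done.
  rewrite Hk //; [exact: h2|exact/eqP|exact/eqP].
Qed.

Lemma comp_term {d} {S : porderType d} {X} (mv : X -> X -> Prop) (p : S -> option X) i :
  terminating (jmove (fun i j : S => (i < j)%O) mv) p -> terminating (mvo mv) (p i).
Proof.
  move=> Ht [f [Hf0 Hf]]; apply: Ht.
  exists (fun n => if n is n'.+1 then
     (fun j => if j == i then f n else if (i < j)%O then None else p j) else p).
  split=> // n; exists i; split.
  - case: n => [|n] /=; rewrite eqxx; [rewrite -Hf0; exact: Hf 0 | exact: Hf].
  split.
  - by move=> j hj /=; rewrite (gt_eqF hj) hj.
  - move=> j nj nlt /=. have e1 := introF eqP nj. have e2 := introF idP nlt.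
    by case: n => [|n] /=; rewrite e1 e2.
Qed.

Definition Rel {d} {S : porderType d} {X} (mv : X -> X -> Prop) (sigma : S -> S)
  (Go : option X -> Ord) (p : S -> option X) (q : fixpts sigma -> option X) : Prop :=
  terminating (jmove (fun i j : S => (i < j)%O) mv) p /\
  (forall k, p (proj1_sig k) = q k) /\ (forall i, Cpair mv sigma Go p i).

Lemma moveQ {d} {S : porderType d} {X} (mv : X -> X -> Prop) (sigma : S -> S) Go p q q' :
  (forall i, sigma (sigma i) = i) -> weakly_order_preserving sigma ->
  lower_set (fun i => sigma i = i) ->
  Rel mv sigma Go p q -> jmove (fix_lt sigma) mv q q' ->
  exists p', jmove (fun i j : S => (i < j)%O) mv p p' /\ Rel mv sigma Go p' q'.
Proof.
  move=> inv w low [tp [Hq HC]] [k0 [Hm [Hz Hk]]].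
  pose p' := fun j => if j == proj1_sig k0 then q' k0
                      else if (proj1_sig k0 < j) then None else p j.
  have Hz' : forall j, proj1_sig k0 < j -> p' j = None.
    by move=> j hj; rewrite /p' (gt_eqF hj) hj.
  have Hk' : forall j, j <> proj1_sig k0 -> ~ proj1_sig k0 < j -> p' j = p j.
    by move=> j nj nlt; rewrite /p' (introF eqP nj) (introF idP nlt).
  have mp : jmove (fun i j : S => (i < j)%O) mv p p'.
    exists (proj1_sig k0); split; last by split.
    by rewrite /p' eqxx Hq.
  exists p'; split=> //; split; first exact: term_step tp mp.
  split; last exact: (FM mv sigma Go p p' (proj1_sig k0) inv w low (proj2_sig k0) Hz' Hk' HC).
  move=> k. rewrite /p'. case: (eqVneq (proj1_sig k) (proj1_sig k0)) => [e|ne].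
    by rewrite (sig_eq _ _ e) ?eqxx.
  case hl: (proj1_sig k0 < proj1_sig k).
    by symmetry; apply: Hz.
  rewrite Hk ?Hq //.
  - by move=> e; rewrite e eqxx in ne.
  - by rewrite /fix_lt hl.
Qed.

Lemma caseA {d} {S : porderType d} {X} (mv : X -> X -> Prop) (sigma : S -> S) Go p q p' i0 yt :
  (forall i, sigma (sigma i) = i) -> weakly_order_preserving sigma ->
  lower_set (fun i => sigma i = i) ->
  Rel mv sigma Go p q -> jmove (fun i j : S => (i < j)%O) mv p p' ->
  mvo mv (p i0) (p' i0) -> (forall j, i0 < j -> p' j = None) ->
  (forall j, j <> i0 -> ~ i0 < j -> p' j = p j) -> sigma i0 <> i0 ->
  mvo mv (p (sigma i0)) yt -> oeq (Go yt) (Go (p' i0)) ->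
  exists p'', jmove (fun i j : S => (i < j)%O) mv p' p'' /\ Rel mv sigma Go p'' q.
Proof.
  move=> inv w low [tp [Hq HC]] Hmv Hm Hz Hk s0 Hyt Heq.
  have pn : p i0 <> None by move=> e; rewrite e in Hm.
  have ni : ~ i0 < sigma i0 := fun h => notU_sig inv w i0 (or_introl h).
  have ns : ~ sigma i0 < i0 := fun h => notU_self w i0 (or_intror h).
  have ps : p' (sigma i0) = p (sigma i0) := Hk _ s0 ni.
  pose p'' := fun j => if j == sigma i0 then yt else if (sigma i0 < j) then None else p' j.
  have Hz' : forall j, sigma i0 < j -> p'' j = None.
    by move=> j hj; rewrite /p'' (gt_eqF hj) hj.
  have Hk' : forall j, j <> sigma i0 -> ~ sigma i0 < j -> p'' j = p' j.
    by move=> j nj nlt; rewrite /p'' (introF eqP nj) (introF idP nlt).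
  have mp : jmove (fun i j : S => (i < j)%O) mv p' p''.
    exists (sigma i0); split; last by split.
    by rewrite /p'' eqxx ps.
  exists p''; split=> //; split; first exact: term_step (term_step tp Hmv) mp.
  split.
  - move=> k. have fk := proj2_sig k. move: fk. set j := proj1_sig k => fk.
    have jn1 : j <> sigma i0.
      move=> e; apply: s0; move: fk; rewrite e inv => h; exact: esym h.
    have jn2 : ~ sigma i0 < j.
      move=> h; exact: (nofixU inv low i0 j s0 (or_intror h) fk).
    have jn3 : j <> i0 by move=> e; apply: s0; rewrite -e; exact: fk.
    have jn4 : ~ i0 < j by move=> h; exact: (nofixU inv low i0 j s0 (or_introl h) fk).
    by rewrite Hk' // Hk // Hq.
  - apply: (RF mv sigma Go p p'' i0 inv w s0 pn _ _ _ HC).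
    + have n0 : i0 <> sigma i0 by move=> e; apply: s0; rewrite -e.
      rewrite Hk' // /p'' eqxx. exact: oeq_sym.
    + move=> j hj. case: (eqVneq j (sigma i0)) => [e|ne].
        by subst j; exfalso; apply: (notU_sig inv w i0 hj).
      case hl: (sigma i0 < j); first exact: Hz'.
      rewrite Hk'; last by rewrite hl.
      + case: hj => [h|h]; [exact: Hz | by rewrite h in hl].
      + exact/eqP.
    + move=> j nu n1 n2. rewrite Hk' //; last by move=> h; apply: nu; right.
      rewrite Hk //; by move=> h; apply: nu; left.
Qed.

Lemma caseB {d} {S : porderType d} {X} (mv : X -> X -> Prop) (sigma : S -> S) Go p q p' i0 y' :
  (forall i, sigma (sigma i) = i) -> weakly_order_preserving sigma ->
  lower_set (fun i => sigma i = i) ->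
  Rel mv sigma Go p q -> jmove (fun i j : S => (i < j)%O) mv p p' ->
  mvo mv (p i0) (p' i0) -> (forall j, i0 < j -> p' j = None) ->
  (forall j, j <> i0 -> ~ i0 < j -> p' j = p j) -> sigma i0 <> i0 ->
  (forall j, Uset sigma i0 j -> p j = None) ->
  mvo mv (p' i0) y' -> oeq (Go y') (Go (p (sigma i0))) ->
  exists p'', jmove (fun i j : S => (i < j)%O) mv p' p'' /\ Rel mv sigma Go p'' q.
Proof.
  move=> inv w low [tp [Hq HC]] Hmv Hm Hz Hk s0 HU Hy Heq.
  have pn : p i0 <> None by move=> e; rewrite e in Hm.
  have ni : ~ i0 < sigma i0 := fun h => notU_sig inv w i0 (or_introl h).
  have ps : p' (sigma i0) = p (sigma i0) := Hk _ s0 ni.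
  pose p'' := fun j => if j == i0 then y' else if (i0 < j) then None else p' j.
  have Hz' : forall j, i0 < j -> p'' j = None.
    by move=> j hj; rewrite /p'' (gt_eqF hj) hj.
  have Hk' : forall j, j <> i0 -> ~ i0 < j -> p'' j = p' j.
    by move=> j nj nlt; rewrite /p'' (introF eqP nj) (introF idP nlt).
  have mp : jmove (fun i j : S => (i < j)%O) mv p' p''.
    exists i0; split; last by split.
    by rewrite /p'' eqxx.
  exists p''; split=> //; split; first exact: term_step (term_step tp Hmv) mp.
  split.
  - move=> k. have fk := proj2_sig k. move: fk. set j := proj1_sig k => fk.
    have jn3 : j <> i0 by move=> e; apply: s0; rewrite -e; exact: fk.
    have jn4 : ~ i0 < j by move=> h; exact: (nofixU inv low i0 j s0 (or_introl h) fk).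
    by rewrite Hk' // Hk // Hq.
  - apply: (RF mv sigma Go p p'' i0 inv w s0 pn _ _ _ HC).
    + rewrite (Hk' (sigma i0)) // ps /p'' eqxx. exact: Heq.
    + move=> j hj. case: (eqVneq j i0) => [e|ne].
        by subst j; exfalso; apply: (notU_self w i0 hj).
      case hl: (i0 < j); first exact: Hz'.
      have ne' : j <> i0 by exact/eqP.
      have hl' : ~ i0 < j by rewrite hl.
      rewrite Hk' // Hk //. exact: HU.
    + move=> j nu n1 n2. have hl' : ~ i0 < j by move=> h; apply: nu; left.
      by rewrite Hk' // Hk.
Qed.

Lemma moveP {d} {S : porderType d} {X} (mv : X -> X -> Prop) (sigma : S -> S) Go p q p' :
  (forall i, sigma (sigma i) = i) -> weakly_order_preserving sigma ->
  lower_set (fun i => sigma i = i) -> grundy_fun (mvo mv) Go ->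
  Rel mv sigma Go p q -> jmove (fun i j : S => (i < j)%O) mv p p' ->
  (exists p'', jmove (fun i j : S => (i < j)%O) mv p' p'' /\ Rel mv sigma Go p'' q) \/
  (exists q', jmove (fix_lt sigma) mv q q' /\ Rel mv sigma Go p' q').
Proof.
  move=> inv w low gf Hr Hmv. have Hr' := Hr. case: Hr' => [tp [Hq HC]].
  case: (Hmv) => i0 [Hm [Hz Hk]].
  case: (eqVneq (sigma i0) i0) => [fi|nfi].
  - right. exists (fun k => p' (proj1_sig k)). split.
    + exists (exist (fun i => sigma i = i) i0 fi : fixpts sigma). split; [by rewrite -Hq | split].
      * move=> j hj; exact: Hz.
      * move=> j nj nlt. rewrite -Hq. apply: Hk => // e. apply: nj; apply: sig_eq. exact e.
    + split; [exact: term_step tp Hmv|split=> //].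
      exact: (FM mv sigma Go p p' i0 inv w low fi Hz Hk HC).
  - have s0 : sigma i0 <> i0 by apply/eqP.
    left.
    have ni : ~ i0 < sigma i0 := fun h => notU_sig inv w i0 (or_introl h).
    have ps : p' (sigma i0) = p (sigma i0) := Hk _ s0 ni.
    have ta := comp_term mv p i0 tp. have tb := comp_term mv p (sigma i0) tp.
    have ty := term_step ta Hm.
    case: (HC i0) => [HG|[Heq HU]].
    + have : grundy_set (mvo mv) Go (p i0) (Go (p' i0)).
        by exists (p' i0); split=> //; exact: oeq_refl.
      case/HG => yt [myt eyt].
      exact: (caseA mv sigma Go p q p' i0 yt inv w low Hr Hmv Hm Hz Hk s0 myt eyt).
    + case: (ord_tri (Go (p' i0)) (Go (p (sigma i0)))) => [lt|[lt|eq]].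
      * have [_ m2] := gf _ tb. have [yt [myt eyt]] := m2 _ lt.
        exact: (caseA mv sigma Go p q p' i0 yt inv w low Hr Hmv Hm Hz Hk s0 myt eyt).
      * have [_ m2] := gf _ ty. have [y' [my' ey']] := m2 _ lt.
        exact: (caseB mv sigma Go p q p' i0 y' inv w low Hr Hmv Hm Hz Hk s0 HU my' ey').
      * have [m1 _] := gf _ ta. exfalso; apply: m1. exists (p' i0); split=> //.
        exact: oeq_trans eq (oeq_sym Heq).
Qed.

Definition emb {d} {S : porderType d} {X} (i0 : S) (o : option X) : S -> option X :=
  fun j => if j == i0 then o else None.

Lemma emb_at {d} {S : porderType d} {X} (i0 : S) (o : option X) : emb i0 o i0 = o.
Proof. by rewrite /emb eqxx. Qed.

Lemma emb_mv {d} {S : porderType d} {X} (mv : X -> X -> Prop) (i0 : S) o r :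
  jmove (fun i j : S => (i < j)%O) mv (emb i0 o) r <-> exists o', mvo mv o o' /\ r = emb i0 o'.
Proof.
  split.
  - move=> [k [Hm [Hz Hk]]]. case: (eqVneq k i0) => [e|ne]; last by rewrite /emb (negbTE ne) in Hm.
    subst k. exists (r i0); split; first by rewrite emb_at in Hm.
    apply: functional_extensionality => j. rewrite /emb.
    case: (eqVneq j i0) => [->|nj] //.
    case hl: (i0 < j); first exact: Hz.
    rewrite Hk; first by rewrite /emb (negbTE nj).
    + exact/eqP.
    + by rewrite hl.
  - move=> [o' [m ->]]. exists i0. split; first by rewrite !emb_at.
    split.
    + by move=> j hj; rewrite /emb (gt_eqF hj).
    + by move=> j nj _; rewrite /emb (introF eqP nj).
Qed.

Lemma emb_term {d} {S : porderType d} {X} (mv : X -> X -> Prop) (i0 : S) o :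
  terminating (mvo mv) o -> terminating (jmove (fun i j : S => (i < j)%O) mv) (emb i0 o).
Proof.
  move=> Ht [f [Hf0 Hf]].
  have E : forall n, f n = emb i0 (f n i0).
    elim=> [|n IH]; first by rewrite Hf0 emb_at.
    have := Hf n; rewrite {1}IH => /emb_mv [o' [_ e]]. by rewrite e emb_at.
  apply: Ht. exists (fun n => f n i0). split; first by rewrite Hf0 emb_at.
  move=> n. have := Hf n; rewrite {1}(E n) => /emb_mv [o' [m e]]. by rewrite e emb_at.
Qed.

Lemma mex_ext (L L' : Ord -> Prop) a : (forall b, L b <-> L' b) -> is_mex L a -> is_mex L' a.
Proof. move=> h [m1 m2]; split; [by move/h | by move=> b /m2/h]. Qed.

Lemma core {d} {S : porderType d} (X : Type) (mv : X -> X -> Prop) (G : S -> X)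
  (sigma : S -> S) (i0 : S) :
  terminating (jmove (fun i j : S => (i < j)%O) mv) (join_start G) ->
  (forall i, sigma (sigma i) = i) ->
  weakly_order_preserving sigma ->
  (forall Gam : X -> Ord, grundy_fun mv Gam ->
     forall i b, grundy_set mv Gam (G i) b <-> grundy_set mv Gam (G (sigma i)) b) ->
  lower_set (fun i => sigma i = i) ->
  forall (Gam1 : (S -> option X) -> Ord) (Gam2 : (fixpts sigma -> option X) -> Ord),
    grundy_fun (jmove (fun i j : S => (i < j)%O) mv) Gam1 ->
    grundy_fun (jmove (fix_lt sigma) mv) Gam2 ->
    oeq (Gam1 (join_start G)) (Gam2 (join_start (fun i : fixpts sigma => G (proj1_sig i)))).
Proof.
  move=> ts inv w hG low Gam1 Gam2 gJ gF.
  pose Go := fun o : option X => Gam1 (emb i0 o).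
  have gfo : grundy_fun (mvo mv) Go.
    move=> o to. apply: mex_ext (gJ _ (emb_term mv i0 o to)) => b; split.
    - move=> [r [mr e]]. have [o' [m er]] := (iffLR (emb_mv mv i0 o r)) mr.
      exists o'; split=> //. by rewrite /Go -er.
    - move=> [o' [m e]]. exists (emb i0 o'); split=> //.
      apply/emb_mv; by exists o'.
  pose GX := fun x => Go (Some x).
  have conv : forall x b, grundy_set mv GX x b <-> grundy_set (mvo mv) Go (Some x) b.
    move=> x b; split.
    - by move=> [y [m e]]; exists (Some y).
    - by move=> [[y|] [m e]] //; exists y.
  have gfx : grundy_fun mv GX.
    move=> x tx. have to : terminating (mvo mv) (Some x).
      move=> [f [Hf0 Hf]]; apply: tx.
      exists (fun n => if f n is Some y then y else x). split; first by rewrite Hf0.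
      move=> n. have := Hf n. by case: (f n) => [a|] //; case: (f n.+1) => [b|].
    apply: mex_ext (gfo _ to) => b. split; by move/conv.
  apply: (@sg_lemma _ _ _ _ _ _ (Rel mv sigma Go) gJ gF).
  - by move=> p q [].
  - move=> p q p' Hr Hm; exact: (moveP mv sigma Go p q p' inv w low gfo Hr Hm).
  - move=> p q q' Hr Hm; exact: (moveQ mv sigma Go p q q' inv w low Hr Hm).
  - split=> //; split=> // i. left=> b. rewrite /join_start.
    split; move/conv; [move/(hG GX gfx i b) | move/(hG GX gfx i b)]; by move/conv.
Qed.
Local Close Scope order_scope.

Theorem mainTheorem9 (d : Order.disp_t) (S : porderType d)
  (X : Type) (mv : X -> X -> Prop) (G : S -> X) (sigma : S -> S) :
  terminating (jmove (fun i j : S => (i < j)%O) mv) (join_start G) ->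
  (forall i, sigma (sigma i) = i) ->
  weakly_order_preserving sigma ->
  (forall Gam : X -> Ord, grundy_fun mv Gam ->
     forall i b, grundy_set mv Gam (G i) b <-> grundy_set mv Gam (G (sigma i)) b) ->
  lower_set (fun i => sigma i = i) ->
  forall (Gam1 : (S -> option X) -> Ord) (Gam2 : (fixpts sigma -> option X) -> Ord),
    grundy_fun (jmove (fun i j : S => (i < j)%O) mv) Gam1 ->
    grundy_fun (jmove (fix_lt sigma) mv) Gam2 ->
    oeq (Gam1 (join_start G)) (Gam2 (join_start (fun i : fixpts sigma => G (proj1_sig i)))).
Proof.
  move=> ts inv w hG low Gam1 Gam2 gJ gF.
  case: (classic (exists i0 : S, True)) => [[i0 _]|Hne].
  - exact: (core X mv G sigma i0 ts inv w hG low Gam1 Gam2 gJ gF).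
  - apply: (@sg_lemma _ _ _ _ _ _ (fun _ _ => True) gJ gF) => //.
    + move=> p q _ [f [_ Hf]]; case: (Hf 0) => i0 _; apply: Hne; by exists i0.
    + move=> p q p' _ [i0 _]; exfalso; apply: Hne; by exists i0.
    + move=> p q q' _ [k _]; exfalso; apply: Hne; by exists (proj1_sig k).
Qed.
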